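(* Let $\rho\in(-1,1)$, $\alpha>0$, $\mu>0$, $\Sigma=\begin{pmatrix}1&\rho\\\rho&1\end{pmatrix}$, and $g(t)=\frac1t\inf_{\vec x\ge(1+t,\ \alpha+\mu t)^\top}\vec x^\top\Sigma^{-1}\vec x$ for $t\ge0$. Let $t_0$ denote the unique minimiser of $g$ on $[0,\infty)$, $I$ the essential index set and $K$ the weakly essential index set associated with $\vec b=(1+t_0,\alpha+\mu t_0)^\top$, $\widehat g=g(t_0)$ and $\widetilde g$ as in the context. Then: (i) Suppose ($\mu<1$ and $\alpha<1$), or ($\mu<1$, $\alpha\ge1$, $\mu\le1/\alpha$), or ($\mu\ge1$, $\alpha<1$, $\mu\le1/\alpha$). (i.R1) If $-1<\rho<\frac{\alpha+\mu}2$: $t_0=t_0^{(0)}$, $I=\{1,2\}$, $K=\emptyset$, $\widehat g=g_0(t_0^{(0)})$, $\widetilde g=g_0''(t_0^{(0)})$. (i.R2) If $\rho=\frac{\alpha+\mu}2$: $t_0=t_0^{(0)}=t_0^{(1)}$, $I=\{1\}$, $K=\{2\}$, $\widehat g=g_0(t_0^{(0)})=g_1(t_0^{(1)})=4$, $\widetilde g=g_1''(t_0^{(1)})=2$. (i.R3) If $\frac{\alpha+\mu}2<\rho<1$: $t_0=t_0^{(1)}$, $I=\{1\}$, $K=\emptyset$, $\widehat g=g_1(t_0^{(1)})=4$, $\widetilde g=g_1''(t_0^{(1)})=2$. (ii) Suppose ($\mu\ge1$ and $\alpha\ge1$), or ($\mu<1$, $\alpha\ge1$, $\mu>1/\alpha$),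 or ($\mu\ge1$, $\alpha<1$, $\mu>1/\alpha$). (ii.R1) If $-1<\rho<\frac{\alpha+\mu}{2\alpha\mu}$: $t_0=t_0^{(0)}$, $I=\{1,2\}$, $K=\emptyset$, $\widehat g=g_0(t_0^{(0)})$, $\widetilde g=g_0''(t_0^{(0)})$. (ii.R2) If $\rho=\frac{\alpha+\mu}{2\alpha\mu}$: $t_0=t_0^{(0)}=t_0^{(2)}$, $I=\{2\}$, $K=\{1\}$, $\widehat g=g_0(t_0^{(0)})=g_2(t_0^{(2)})=4\alpha\mu$, $\widetilde g=g_2''(t_0^{(2)})=2\alpha^{-1}\mu^3$. (ii.R3) If $\frac{\alpha+\mu}{2\alpha\mu}<\rho<1$: $t_0=t_0^{(2)}$, $I=\{2\}$, $K=\emptyset$, $\widehat g=g_2(t_0^{(2)})=4\alpha\mu$, $\widetilde g=g_2''(t_0^{(2)})=2\alpha^{-1}\mu^3$.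
   Context: For positive definite $M$ and $\vec b\notin(-\infty,0]^2$, minimising $\vec x^\top M^{-1}\vec x$ over $\vec x\ge\vec b$ has a unique solution $\widetilde{\vec b}$ and a unique non-empty essential index set $I\subseteq\{1,2\}$ with $\widetilde{\vec b}_I=\vec b_I$, $M_{II}^{-1}\vec b_I>0$, and $\widetilde{\vec b}_{I^c}=M_{I^cI}M_{II}^{-1}\vec b_I\ge\vec b_{I^c}$ if $I^c\ne\emptyset$ (here $\vec a_I$, $M_{IJ}$ denote sub-vectors/sub-matrices). The weakly essential index set is $K=\{j\notin I:\Sigma_{jI}\Sigma_{II}^{-1}\vec b_I=b_j\}$ (with $M=\Sigma$). Writing $\vec\alpha=(1,\alpha)^\top$, $\vec\mu=(1,\mu)^\top$, $\widetilde g=2t_0^{-3}\vec\alpha_I^\top\Sigma_{II}^{-1}\vec\alpha_I$. Further $g_0(t)=\frac{1+\alpha^2-2\alpha\rho}{1-\rho^2}\frac1t+\frac{2(1+\alpha\mu-\rho\alpha-\rho\mu)}{1-\rho^2}+\frac{1+\mu^2-2\rho\mu}{1-\rho^2}t$, $g_1(t)=\frac1t(1+t)^2$, $g_2(t)=\frac1t(\alpha+\mu t)^2$, with unique minimisers on $[0,\infty)$ given by $t_0^{(0)}=\sqrt{\frac{1+\alpha^2-2\alpha\rho}{1+\mu^2-2\mu\rho}}$, $t_0^{(1)}=1$, $t_0^{(2)}=\alpha/\mu$. *)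

(* Defs.v *)
From HB Require Import structures.
From mathcomp Require Import all_boot all_order all_algebra.
From mathcomp Require Import all_classical all_reals all_analysis.
Set Implicit Arguments. Unset Strict Implicit. Unset Printing Implicit Defensive.
Import Order.TTheory GRing.Theory Num.Theory.
Local Open Scope ring_scope.
Local Open Scope classical_set_scope.

Section Defs.
Variable R : realType.

Definition vle (m : nat) (x y : 'cV[R]_m) : Prop := forall i, x i 0 <= y i 0.

Section QP.
Variable n : nat.

Definition qform (M : 'M[R]_n) (x : 'cV[R]_n) : R := (x^T *m invmx M *m x) 0 0.

Definition is_qp_min (M : 'M[R]_n) (b x : 'cV[R]_n) : Prop :=
  vle b x /\ forall y, vle b y -> qform M x <= qform M y.

(* sub-vector a_I and sub-matrix M_{IJ} (indices enumerated increasingly) *)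
Definition subcv (I : {set 'I_n}) (a : 'cV[R]_n) : 'cV[R]_#|I| :=
  \col_(k < #|I|) a (enum_val k) 0.
Definition submx (I J : {set 'I_n}) (M : 'M[R]_n) : 'M[R]_(#|I|, #|J|) :=
  \matrix_(k < #|I|, l < #|J|) M (enum_val k) (enum_val l).

Definition is_essential (M : 'M[R]_n) (b : 'cV[R]_n) (I : {set 'I_n}) : Prop :=
  I != finset.set0 /\
  exists bt : 'cV[R]_n,
    [/\ is_qp_min M b bt,
        subcv I bt = subcv I b,
        (forall k, 0 < (invmx (submx I I M) *m subcv I b) k 0),
        subcv (~: I) bt = submx (~: I) I M *m invmx (submx I I M) *m subcv I b
      & vle (subcv (~: I) b) (subcv (~: I) bt)].

(* THE essential index set (unique by the context) *)
Definition essential_set (M : 'M[R]_n) (b : 'cV[R]_n) : {set 'I_n} :=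
  xget finset.set0 [set I | is_essential M b I].

Definition weak_essential_set (M : 'M[R]_n) (b : 'cV[R]_n) : {set 'I_n} :=
  let I := essential_set M b in
  [set j | (j \notin I) &&
     (((\row_(k < #|I|) M j (enum_val k)) *m invmx (submx I I M) *m subcv I b) 0 0
        == b j 0)].

Definition gtilde (M : 'M[R]_n) (b a : 'cV[R]_n) (t0 : R) : R :=
  let I := essential_set M b in
  2 * t0 ^- 3 * ((subcv I a)^T *m invmx (submx I I M) *m subcv I a) 0 0.
End QP.

Definition col2 (a b : R) : 'cV[R]_2 := \col_(i < 2) [:: a; b]`_i.

Definition idx1 : 'I_2 := ord0.
Definition idx2 : 'I_2 := ord_max.

Definition Sigma (rho : R) : 'M[R]_2 :=
  \matrix_(i < 2, j < 2) (if i == j then 1 else rho).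

Definition bvec (alpha mu t : R) : 'cV[R]_2 := col2 (1 + t) (alpha + mu * t).

(* g(t) = t^{-1} inf_{x >= b(t)} x^T Sigma^{-1} x   (used for t > 0) *)
Definition g (rho alpha mu t : R) : R :=
  t^-1 * inf [set qform (Sigma rho) x | x in [set x | vle (bvec alpha mu t) x]].

Definition g0 (rho alpha mu t : R) : R :=
  (1 + alpha ^+ 2 - 2 * alpha * rho) / (1 - rho ^+ 2) * t^-1
  + 2 * (1 + alpha * mu - rho * alpha - rho * mu) / (1 - rho ^+ 2)
  + (1 + mu ^+ 2 - 2 * rho * mu) / (1 - rho ^+ 2) * t.
Definition g1 (t : R) : R := t^-1 * (1 + t) ^+ 2.
Definition g2 (alpha mu t : R) : R := t^-1 * (alpha + mu * t) ^+ 2.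

Definition t00 (rho alpha mu : R) : R :=
  Num.sqrt ((1 + alpha ^+ 2 - 2 * alpha * rho) / (1 + mu ^+ 2 - 2 * mu * rho)).
Definition t01 : R := 1.
Definition t02 (alpha mu : R) : R := alpha / mu.

Definition d2 (f : R -> R) : R -> R := derive1 (derive1 f).

(* t0 is the unique minimiser of f on (0, oo)  (g(0) = +oo) *)
Definition unique_min (f : R -> R) (t0 : R) : Prop :=
  [/\ 0 < t0,
      (forall t, 0 < t -> f t0 <= f t)
    & (forall t, 0 < t -> f t = f t0 -> t = t0)].

Definition regime (rho alpha mu t0 : R) (I K : {set 'I_2}) (ghat gtil : R) : Prop :=
  [/\ unique_min (g rho alpha mu) t0,
      essential_set (Sigma rho) (bvec alpha mu t0) = I,
      weak_essential_set (Sigma rho) (bvec alpha mu t0) = K,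
      g rho alpha mu t0 = ghat
    & gtilde (Sigma rho) (bvec alpha mu t0) (col2 1 alpha) t0 = gtil].

End Defs.

(* Main.v *)
Require Import Defs.
From HB Require Import structures.
From mathcomp Require Import all_boot all_order all_algebra.
From mathcomp Require Import all_classical all_reals all_analysis.
From mathcomp Require Import ring lra.
Import Order.TTheory GRing.Theory Num.Theory.
Import numFieldNormedType.Exports.
Local Open Scope ring_scope.
Local Open Scope classical_set_scope.
Set Implicit Arguments. Unset Strict Implicit. Unset Printing Implicit Defensive.

Section S.
Variable R : realType.
Definition q2 (rho x1 x2 : R) := (x1^+2 - 2*rho*x1*x2 + x2^+2)/(1-rho^+2).
Definition Ninv (rho : R) : 'M[R]_2 := \matrix_(i,j) ((if i == j then 1 else - rho) / (1 - rho^+2)).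

Lemma invmx_eq n (A B : 'M[R]_n.+1) : A *m B = 1%:M -> invmx A = B.
Proof.
move=> AB; have [uA _] := mulmx1_unit AB.
by rewrite -[invmx A]mulmx1 -AB mulmxA mulVmx // mul1mx.
Qed.

Lemma invSigma rho : rho^+2 != 1 -> invmx (Sigma rho) = Ninv rho.
Proof.
move=> h; have h' : 1 - rho^+2 != 0 by rewrite subr_eq0 eq_sym.
apply: invmx_eq; apply/matrixP => i j.
rewrite !mxE !big_ord_recr big_ord0 /= !mxE.
case: i => [[|[|i]] Hi] //=; case: j => [[|[|j]] Hj] //=; rewrite /=; field; done.
Qed.
Lemma sum2 (F : 'I_2 -> R) : \sum_(i<2) F i = F idx1 + F idx2.
Proof. by rewrite !big_ord_recr big_ord0 /= add0r; congr (F _ + F _); apply: val_inj. Qed.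

Lemma qformE rho (x : 'cV[R]_2) : rho^+2 != 1 ->
  qform (Sigma rho) x = q2 rho (x idx1 0) (x idx2 0).
Proof.
move=> h; rewrite /qform invSigma // /q2.
rewrite !mxE !sum2 !mxE !sum2 !mxE /=.
have h' : 1 - rho^+2 != 0 by rewrite subr_eq0 eq_sym.
by field.
Qed.

Lemma col2E1 (a b : R) : col2 a b idx1 0 = a. Proof. by rewrite mxE. Qed.
Lemma col2E2 (a b : R) : col2 a b idx2 0 = b. Proof. by rewrite mxE. Qed.

Lemma I2cases (i : 'I_2) : i = idx1 \/ i = idx2.
Proof. case: i => [[|[|i]] Hi] //=; [left|right]; exact: val_inj. Qed.

Lemma vle2 (x y : 'cV[R]_2) : vle x y <-> x idx1 0 <= y idx1 0 /\ x idx2 0 <= y idx2 0.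
Proof.
split; first by move=> H; split; apply: H.
by move=> [H1 H2] i; case: (I2cases i) => ->.
Qed.
Lemma g_lb (rho alpha mu t L : R) : 0 < t ->
  (forall x, vle (bvec alpha mu t) x -> L <= qform (Sigma rho) x) ->
  t^-1 * L <= g rho alpha mu t.
Proof.
move=> t0 H; rewrite /g ler_pM2l ?invr_gt0 //.
apply: lb_le_inf.
  by exists (qform (Sigma rho) (bvec alpha mu t)), (bvec alpha mu t) => //.
by move=> _ [x Hx <-]; apply: H.
Qed.

Lemma g_eq (rho alpha mu t : R) xs : 
  vle (bvec alpha mu t) xs ->
  (forall x, vle (bvec alpha mu t) x -> qform (Sigma rho) xs <= qform (Sigma rho) x) ->
  g rho alpha mu t = t^-1 * qform (Sigma rho) xs.
Proof.
move=> Hxs H; rewrite /g; congr (_ * _); apply/eqP; rewrite eq_le; apply/andP; split.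
  apply: ge_inf; last by exists xs.
  by exists (qform (Sigma rho) xs) => _ [x Hx <-]; apply: H.
apply: lb_le_inf; first by exists (qform (Sigma rho) xs), xs.
by move=> _ [x Hx <-]; apply: H.
Qed.
Definition scv m (f : 'I_m -> 'I_2) (a : 'cV[R]_2) : 'cV[R]_m := \col_(k < m) a (f k) 0.
Definition smx m1 m2 (f1 : 'I_m1 -> 'I_2) (f2 : 'I_m2 -> 'I_2) (M : 'M[R]_2) : 'M[R]_(m1,m2) :=
  \matrix_(k, l) M (f1 k) (f2 l).
Definition ESS m mc (f : 'I_m -> 'I_2) (fc : 'I_mc -> 'I_2) (M : 'M[R]_2) (b bt : 'cV[R]_2) :=
  [/\ scv f bt = scv f b,
      (forall k, 0 < (invmx (smx f f M) *m scv f b) k 0),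
      scv fc bt = smx fc f M *m invmx (smx f f M) *m scv f b
    & vle (scv fc b) (scv fc bt)].

Lemma essE (M : 'M[R]_2) b (I : {set 'I_2}) :
  is_essential M b I <-> I != finset.set0 /\ exists bt, is_qp_min M b bt /\
     ESS (@enum_val _ (mem I)) (@enum_val _ (mem (~: I))) M b bt.
Proof.
rewrite /is_essential /ESS /subcv /scv /submx /smx.
split; move=> [H1 [bt H2]]; split => //; exists bt.
  by case: H2 => *; split.
by case: H2 => H2 [] *; split.
Qed.
Lemma Ninvb1 (rho : R) (b : 'cV[R]_2) : (Ninv rho *m b) idx1 0 = (b idx1 0 - rho * b idx2 0) / (1 - rho^+2).
Proof. rewrite !mxE sum2 !mxE /=; ring. Qed.
Lemma Ninvb2 (rho : R) (b : 'cV[R]_2) : (Ninv rho *m b) idx2 0 = (b idx2 0 - rho * b idx1 0) / (1 - rho^+2).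
Proof. rewrite !mxE sum2 !mxE /=; ring. Qed.

Lemma ESS_T m mc (f : 'I_m -> 'I_2) (fc : 'I_mc -> 'I_2) (rho : R) (b bt : 'cV[R]_2) :
  m = 2%N -> mc = 0%N -> (forall k, val (f k) = val k) -> -1 < rho -> rho < 1 ->
  ESS f fc (Sigma rho) b bt <->
  [/\ bt = b, 0 < b idx1 0 - rho * b idx2 0 & 0 < b idx2 0 - rho * b idx1 0].
Proof.
move=> em emc; subst m mc => fv r1 r2.
have hp : 0 < 1 - rho^+2 by nra.
have h : rho^+2 != 1 by apply/eqP => e; move: hp; rewrite e subrr ltxx.
have hpi : 0 < (1 - rho^+2)^-1 by rewrite invr_gt0.
have fid : forall k, f k = k by move=> k; apply: val_inj; rewrite fv.
have sm : smx f f (Sigma rho) = Sigma rho by apply/matrixP => i j; rewrite !mxE !fid.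
have sc : forall a, scv f a = a by move=> a; apply/matrixP => i j; rewrite !mxE fid (ord1 j).
rewrite /ESS sm !sc invSigma //.
have e0 : forall (A B : 'cV[R]_0), A = B by move=> A B; apply/matrixP => [[]].
have v0 : forall (A B : 'cV[R]_0), vle A B by move=> A B [].
split.
  case=> -> Hp _ _; split => //.
    by have := Hp idx1; rewrite Ninvb1 pmulr_lgt0.
  by have := Hp idx2; rewrite Ninvb2 pmulr_lgt0.
case=> -> H1 H2; split => //.
by move=> k; case: (I2cases k) => ->; rewrite ?Ninvb1 ?Ninvb2 pmulr_lgt0.
Qed.
Lemma ESS_1 m mc (f : 'I_m -> 'I_2) (fc : 'I_mc -> 'I_2) (rho : R) (b bt : 'cV[R]_2) i j :
  m = 1%N -> mc = 1%N -> (forall k, f k = i) -> (forall k, fc k = j) -> i != j ->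
  ESS f fc (Sigma rho) b bt <->
  [/\ bt i 0 = b i 0, 0 < b i 0, bt j 0 = rho * b i 0 & b j 0 <= bt j 0].
Proof.
move=> em emc; subst m mc => fi fj ij.
have sm : smx f f (Sigma rho) = 1%:M.
  by apply/matrixP => k l; rewrite !mxE !fi eqxx (ord1 k) (ord1 l).
rewrite /ESS sm invmx1 mulmx1.
have cv : forall (A B : 'cV[R]_1), (A = B) = (A 0 0 = B 0 0).
  by move=> A B; apply/propext; split => [->//|e]; apply/matrixP => k l; rewrite (ord1 k) (ord1 l).
have vl : forall (A B : 'cV[R]_1), vle A B = (A 0 0 <= B 0 0).
  by move=> A B; apply/propext; split => [->//|e] k; rewrite (ord1 k).
rewrite !cv vl mul1mx /scv /smx !mxE big_ord1 !mxE !fi !fj eq_sym (negPf ij).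
split; first by case=> ? H ? ?; split => //; have := H 0; rewrite !mxE fi.
case=> ? H ? ?; split => // k; rewrite (ord1 k) !mxE fi //.
Qed.
Lemma cardT2 : #|[set: 'I_2]%SET| = 2%N. Proof. by rewrite cardsT card_ord. Qed.
Lemma cardCT2 : #|~: [set: 'I_2]%SET| = 0%N. Proof. by rewrite finset.setCT cards0. Qed.
Lemma card1 (i : 'I_2) : #|[set i]%SET| = 1%N. Proof. exact: cards1. Qed.
Lemma cardC1 (i : 'I_2) : #|~: [set i]%SET| = 1%N. Proof. by have := cardsC [set i]%SET; rewrite cards1 card_ord; case. Qed.

Lemma ev_set1 (i : 'I_2) (k : 'I_#|[set i]%SET|) : @enum_val _ (mem [set i]%SET) k = i.
Proof. by have := enum_valP k; rewrite inE => /eqP. Qed.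

Lemma ev_setC1 (k : 'I_#|~: [set idx1]%SET|) : @enum_val _ (mem (~: [set idx1]%SET)) k = idx2.
Proof. by have := enum_valP k; rewrite !inE; case: (I2cases (enum_val k)) => ->. Qed.
Lemma ev_setC2 (k : 'I_#|~: [set idx2]%SET|) : @enum_val _ (mem (~: [set idx2]%SET)) k = idx1.
Proof. by have := enum_valP k; rewrite !inE; case: (I2cases (enum_val k)) => ->. Qed.

Lemma ev_setT (k : 'I_#|[set: 'I_2]%SET|) : val (@enum_val _ (mem [set: 'I_2]%SET) k) = val k.
Proof.
have hk : (val k < 2)%N := leq_trans (ltn_ord k) (eq_leq cardT2).
by rewrite (enum_val_nth ord0) enum_setT -enumT; exact: (nth_enum_ord _ hk).
Qed.
Lemma col2_eq (x : 'cV[R]_2) : x = col2 (x idx1 0) (x idx2 0).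
Proof. by apply/matrixP => i j; rewrite (ord1 j); case: (I2cases i) => ->; rewrite mxE. Qed.

Lemma essT (rho : R) (b : 'cV[R]_2) : -1 < rho -> rho < 1 ->
  is_essential (Sigma rho) b [set: 'I_2]%SET <->
  [/\ 0 < b idx1 0 - rho * b idx2 0, 0 < b idx2 0 - rho * b idx1 0 & is_qp_min (Sigma rho) b b].
Proof.
move=> r1 r2; rewrite essE.
have ne : [set: 'I_2]%SET != finset.set0 by apply/set0Pn; exists idx1; rewrite inE.
split.
  case=> _ [bt [Hq /(@ESS_T _ _ _ _ _ _ _ cardT2 cardCT2 ev_setT r1 r2) [e H1 H2]]].
  by subst bt.
case=> H1 H2 Hq; split => //; exists b; split => //.
by apply/(@ESS_T _ _ _ _ _ _ _ cardT2 cardCT2 ev_setT r1 r2).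
Qed.

Lemma ess1 (rho : R) (b : 'cV[R]_2) :
  is_essential (Sigma rho) b [set idx1]%SET <->
  [/\ 0 < b idx1 0, b idx2 0 <= rho * b idx1 0 & is_qp_min (Sigma rho) b (col2 (b idx1 0) (rho * b idx1 0))].
Proof.
rewrite essE.
have ne : [set idx1]%SET != finset.set0 by apply/set0Pn; exists idx1; rewrite inE.
have ij : idx1 != idx2 by [].
split.
  case=> _ [bt [Hq /(@ESS_1 _ _ _ _ _ _ _ _ _ (card1 _) (cardC1 _) (@ev_set1 _) ev_setC1 ij) [e1 H1 e2 H2]]].
  by move: Hq H2; rewrite (col2_eq bt) e1 e2 col2E2.
case=> H1 H2 Hq; split => //; exists (col2 (b idx1 0) (rho * b idx1 0)); split => //.
by apply/(@ESS_1 _ _ _ _ _ _ _ _ _ (card1 _) (cardC1 _) (@ev_set1 _) ev_setC1 ij); rewrite col2E1 col2E2.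
Qed.

Lemma ess2 (rho : R) (b : 'cV[R]_2) :
  is_essential (Sigma rho) b [set idx2]%SET <->
  [/\ 0 < b idx2 0, b idx1 0 <= rho * b idx2 0 & is_qp_min (Sigma rho) b (col2 (rho * b idx2 0) (b idx2 0))].
Proof.
rewrite essE.
have ne : [set idx2]%SET != finset.set0 by apply/set0Pn; exists idx2; rewrite inE.
have ij : idx2 != idx1 by [].
split.
  case=> _ [bt [Hq /(@ESS_1 _ _ _ _ _ _ _ _ _ (card1 _) (cardC1 _) (@ev_set1 _) ev_setC2 ij) [e1 H1 e2 H2]]].
  by move: Hq H2; rewrite (col2_eq bt) e1 e2 col2E1.
case=> H1 H2 Hq; split => //; exists (col2 (rho * b idx2 0) (b idx2 0)); split => //.
by apply/(@ESS_1 _ _ _ _ _ _ _ _ _ (card1 _) (cardC1 _) (@ev_set1 _) ev_setC2 ij); rewrite col2E1 col2E2.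
Qed.

Lemma subsets2 (I : {set 'I_2}) :
  [\/ I = finset.set0, I = [set idx1]%SET, I = [set idx2]%SET | I = [set: 'I_2]%SET].
Proof.
case h1: (idx1 \in I); case h2: (idx2 \in I).
- by apply: Or44; apply/setP => i; rewrite inE; case: (I2cases i) => ->.
- by apply: Or42; apply/setP => i; rewrite inE; case: (I2cases i) => ->; rewrite ?h1 ?h2.
- by apply: Or43; apply/setP => i; rewrite inE; case: (I2cases i) => ->; rewrite ?h1 ?h2.
- by apply: Or41; apply/setP => i; rewrite inE; case: (I2cases i) => ->; rewrite ?h1 ?h2.
Qed.

Lemma essential_setE (M : 'M[R]_2) b I :
  is_essential M b I -> (forall J, is_essential M b J -> J = I) -> essential_set M b = I.
Proof. by move=> H U; apply: xget_unique. Qed.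
Lemma rowprod1 m (f : 'I_m -> 'I_2) (rho : R) j (b : 'cV[R]_2) i : m = 1%N -> (forall k, f k = i) ->
  ((\row_(k < m) Sigma rho j (f k)) *m invmx (smx f f (Sigma rho)) *m scv f b) 0 0
   = Sigma rho j i * b i 0.
Proof.
move=> em; subst m => fi.
have sm : smx f f (Sigma rho) = 1%:M.
  by apply/matrixP => k l; rewrite !mxE !fi eqxx (ord1 k) (ord1 l).
by rewrite sm invmx1 mulmx1 !mxE big_ord1 !mxE fi.
Qed.

Lemma quad1 m (f : 'I_m -> 'I_2) (rho : R) (a : 'cV[R]_2) i : m = 1%N -> (forall k, f k = i) ->
  ((scv f a)^T *m invmx (smx f f (Sigma rho)) *m scv f a) 0 0 = a i 0 ^+ 2.
Proof.
move=> em; subst m => fi.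
have sm : smx f f (Sigma rho) = 1%:M.
  by apply/matrixP => k l; rewrite !mxE !fi eqxx (ord1 k) (ord1 l).
by rewrite sm invmx1 mulmx1 !mxE big_ord1 !mxE fi expr2.
Qed.

Lemma quadT m (f : 'I_m -> 'I_2) (rho : R) (a : 'cV[R]_2) : m = 2%N -> (forall k, val (f k) = val k) ->
  rho^+2 != 1 ->
  ((scv f a)^T *m invmx (smx f f (Sigma rho)) *m scv f a) 0 0 = q2 rho (a idx1 0) (a idx2 0).
Proof.
move=> em; subst m => fv h.
have fid : forall k, f k = k by move=> k; apply: val_inj; rewrite fv.
have sm : smx f f (Sigma rho) = Sigma rho by apply/matrixP => i j; rewrite !mxE !fid.
have sc : scv f a = a by apply/matrixP => i j; rewrite !mxE fid (ord1 j).
by rewrite sm sc -qformE.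
Qed.

Lemma weakT (rho : R) b : essential_set (Sigma rho) b = [set: 'I_2]%SET ->
  weak_essential_set (Sigma rho) b = finset.set0.
Proof. by rewrite /weak_essential_set /= => ->; apply/setP => j; rewrite !inE. Qed.

Lemma weak1 (rho : R) b : essential_set (Sigma rho) b = [set idx1]%SET ->
  weak_essential_set (Sigma rho) b =
  (if rho * b idx1 0 == b idx2 0 then [set idx2] else finset.set0)%SET.
Proof.
rewrite /weak_essential_set /= => ->; apply/setP => j; rewrite !inE.
have -> := @rowprod1 _ (@enum_val _ (mem [set idx1]%SET)) rho j b idx1 (card1 _) (@ev_set1 _).
by case: (I2cases j) => ->; case: ifP => E; rewrite ?inE ?mxE /= ?E // eq_sym E.
Qed.

Lemma weak2 (rho : R) b : essential_set (Sigma rho) b = [set idx2]%SET ->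
  weak_essential_set (Sigma rho) b =
  (if rho * b idx2 0 == b idx1 0 then [set idx1] else finset.set0)%SET.
Proof.
rewrite /weak_essential_set /= => ->; apply/setP => j; rewrite !inE.
have -> := @rowprod1 _ (@enum_val _ (mem [set idx2]%SET)) rho j b idx2 (card1 _) (@ev_set1 _).
by case: (I2cases j) => ->; case: ifP => E; rewrite ?inE ?mxE /= ?E // eq_sym E.
Qed.

Lemma gtT (rho : R) b (a : 'cV[R]_2) t0 : -1 < rho -> rho < 1 ->
  essential_set (Sigma rho) b = [set: 'I_2]%SET ->
  gtilde (Sigma rho) b a t0 = 2 * t0 ^- 3 * q2 rho (a idx1 0) (a idx2 0).
Proof.
move=> r1 r2; rewrite /gtilde /= => ->.
have hp : 0 < 1 - rho^+2 by nra.
have h : rho^+2 != 1 by apply/eqP => e; move: hp; rewrite e subrr ltxx.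
by rewrite (@quadT _ (@enum_val _ (mem [set: 'I_2]%SET)) rho a cardT2 ev_setT h).
Qed.

Lemma gt1 (rho : R) b (a : 'cV[R]_2) t0 i :
  essential_set (Sigma rho) b = [set i]%SET ->
  gtilde (Sigma rho) b a t0 = 2 * t0 ^- 3 * a i 0 ^+ 2.
Proof.
rewrite /gtilde /= => ->.
by rewrite (@quad1 _ (@enum_val _ (mem [set i]%SET)) rho a i (card1 _) (@ev_set1 _)).
Qed.
Lemma scRE (a b : R) : a *: b = a * b. Proof. by []. Qed.

Lemma der_inv (x : R) : x != 0 -> is_derive x 1 (fun y : R => y^-1) (- x ^- 2).
Proof.
move=> hx; have := @is_deriveV R id x 1 1 hx (is_derive_id _ _).
by move=> H; apply: is_derive_eq H _; rewrite /= scaler1.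
Qed.

Lemma der_form1 (P Q S x : R) : x != 0 ->
  is_derive x 1 (fun y : R => P * y^-1 + Q + S * y) (- P * x ^- 2 + S).
Proof.
move=> hx.
have -> : (fun y : R => P * y^-1 + Q + S * y) =
   (P \*: (fun y : R => y^-1)) + cst Q + S \*: id by apply/funext => y.
apply: is_derive_eq.
  exact: (is_deriveD (is_deriveD (is_deriveZ P (der_inv hx)) (is_derive_cst Q x 1)) (is_deriveZ S (is_derive_id x 1))).
by rewrite addr0 scaler1 scRE mulrN mulNr.
Qed.

Lemma der_form2 (P S x : R) : x != 0 ->
  is_derive x 1 (fun y : R => - P * y ^- 2 + S) (2 * P * x ^- 3).
Proof.
move=> hx.
have hx2 : x ^+ 2 != 0 by rewrite expf_neq0.
have H2 : is_derive x 1 (fun y : R => y ^+ 2) (2 * x).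
  by apply: (is_derive_eq (is_deriveX 2 (is_derive_id x 1))); rewrite /= expr1 scRE mulr1.
have HV := @is_deriveV R (fun y => y ^+ 2) x (2 * x) 1 hx2 H2.
have -> : (fun y : R => - P * y ^- 2 + S) =
   ((- P) \*: (fun y : R => (y ^+ 2)^-1)) + cst S by apply/funext => y.
apply: (is_derive_eq (is_deriveD (is_deriveZ (- P) HV) (is_derive_cst S x 1))).
by rewrite ?addr0 !scRE; field.
Qed.
Lemma d2_form (f : R -> R) (P Q S s : R) : 0 < s ->
  (forall x, 0 < x -> f x = P * x^-1 + Q + S * x) -> d2 f s = 2 * P * s ^- 3.
Proof.
move=> s0 Hf.
have D1 : forall x, 0 < x -> f^`() x = - P * x ^- 2 + S.
  move=> x x0; rewrite derive1E.
  have nf : \forall y \near x, (fun y => P * y^-1 + Q + S * y) y = f y.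
    by apply: filterS (lt_nbhsr x0) => y y0; rewrite Hf.
  rewrite -(near_eq_derive _ nf).
  by rewrite (@derive_val _ _ _ _ _ _ _ (der_form1 P Q S (lt0r_neq0 x0))).
rewrite /d2 derive1E.
have nf : \forall y \near (s : R), (fun y => - P * y ^- 2 + S) y = f^`() y.
  by apply: filterS (lt_nbhsr s0) => y y0; rewrite D1.
rewrite -(near_eq_derive _ nf).
by rewrite (@derive_val _ _ _ _ _ _ _ (der_form2 P S (lt0r_neq0 s0))).
Qed.
Lemma rho2 (rho : R) : -1 < rho -> rho < 1 -> rho ^+ 2 != 1.
Proof. move=> r1 r2; apply/eqP => e; have : 0 < 1 - rho^+2 by nra. by rewrite e subrr ltxx. Qed.

Lemma bvec1 (alpha mu t : R) : bvec alpha mu t idx1 0 = 1 + t. Proof. exact: col2E1. Qed.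
Lemma bvec2 (alpha mu t : R) : bvec alpha mu t idx2 0 = alpha + mu * t. Proof. exact: col2E2. Qed.

Lemma g_lb2 (rho alpha mu t L : R) : -1 < rho -> rho < 1 -> 0 < t ->
  (forall x1 x2, 1 + t <= x1 -> alpha + mu * t <= x2 -> L <= q2 rho x1 x2) ->
  t^-1 * L <= g rho alpha mu t.
Proof.
move=> r1 r2 t0 H; apply: g_lb => // x /vle2; rewrite bvec1 bvec2 qformE ?rho2 // => -[h1 h2].
exact: H.
Qed.

Lemma qp_min2 (rho : R) (b : 'cV[R]_2) y1 y2 : -1 < rho -> rho < 1 ->
  b idx1 0 <= y1 -> b idx2 0 <= y2 ->
  (forall x1 x2, b idx1 0 <= x1 -> b idx2 0 <= x2 -> q2 rho y1 y2 <= q2 rho x1 x2) ->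
  is_qp_min (Sigma rho) b (col2 y1 y2).
Proof.
move=> r1 r2 h1 h2 H; split; first by apply/vle2; rewrite col2E1 col2E2.
move=> x /vle2 [e1 e2]; rewrite !qformE ?rho2 // col2E1 col2E2; exact: H.
Qed.

Lemma g_eq2 (rho alpha mu t y1 y2 : R) : -1 < rho -> rho < 1 ->
  1 + t <= y1 -> alpha + mu * t <= y2 ->
  (forall x1 x2, 1 + t <= x1 -> alpha + mu * t <= x2 -> q2 rho y1 y2 <= q2 rho x1 x2) ->
  g rho alpha mu t = t^-1 * q2 rho y1 y2.
Proof.
move=> r1 r2 h1 h2 H.
have := @qp_min2 rho (bvec alpha mu t) y1 y2 r1 r2; rewrite bvec1 bvec2 => /(_ h1 h2 H) [Hv Hm].
by rewrite (g_eq Hv Hm) qformE ?rho2 // col2E1 col2E2.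
Qed.

Lemma q2_ge1 (rho x1 x2 : R) : -1 < rho -> rho < 1 -> x1 ^+ 2 <= q2 rho x1 x2.
Proof.
move=> r1 r2; have c0 : 0 < 1 - rho^+2 by nra.
rewrite /q2 ler_pdivlMr //; have := sqr_ge0 (x2 - rho * x1); nra.
Qed.
Lemma q2_ge2 (rho x1 x2 : R) : -1 < rho -> rho < 1 -> x2 ^+ 2 <= q2 rho x1 x2.
Proof.
move=> r1 r2; have c0 : 0 < 1 - rho^+2 by nra.
rewrite /q2 ler_pdivlMr //; have := sqr_ge0 (x1 - rho * x2); nra.
Qed.
Lemma q2_CS (rho w1 w2 x1 x2 : R) : -1 < rho -> rho < 1 ->
  (w1 * x1 + w2 * x2) ^+ 2 <= q2 rho x1 x2 * (w1^+2 + 2 * rho * w1 * w2 + w2^+2).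
Proof.
move=> r1 r2; have c0 : 0 < 1 - rho^+2 by nra.
rewrite /q2 mulrAC ler_pdivlMr //.
have := sqr_ge0 (x1 * w2 - x2 * w1 + rho * (x1 * w1 - x2 * w2)); nra.
Qed.
Lemma q2_diag1 (rho b1 : R) : -1 < rho -> rho < 1 -> q2 rho b1 (rho * b1) = b1 ^+ 2.
Proof. move=> r1 r2; have c0 : 1 - rho^+2 != 0 by rewrite subr_eq0 eq_sym rho2. rewrite /q2; by field. Qed.
Lemma q2_diag2 (rho b2 : R) : -1 < rho -> rho < 1 -> q2 rho (rho * b2) b2 = b2 ^+ 2.
Proof. move=> r1 r2; have c0 : 1 - rho^+2 != 0 by rewrite subr_eq0 eq_sym rho2. rewrite /q2; by field. Qed.

Lemma qpT (rho b1 b2 : R) : -1 < rho -> rho < 1 -> 0 <= b1 - rho * b2 -> 0 <= b2 - rho * b1 ->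
  forall x1 x2, b1 <= x1 -> b2 <= x2 -> q2 rho b1 b2 <= q2 rho x1 x2.
Proof.
move=> r1 r2 w1 w2 x1 x2 h1 h2; have c0 : 0 < 1 - rho^+2 by nra.
rewrite /q2 ler_pM2r ?invr_gt0 //.
have := sqr_ge0 ((x1 - b1) - rho * (x2 - b2)).
have : 0 <= (1 - rho^+2) * (x2 - b2)^+2 by apply: mulr_ge0; [exact: ltW | exact: sqr_ge0].
have : 0 <= (x1 - b1) * (b1 - rho * b2) by apply: mulr_ge0 => //; rewrite subr_ge0.
have : 0 <= (x2 - b2) * (b2 - rho * b1) by apply: mulr_ge0 => //; rewrite subr_ge0.
nra.
Qed.

Lemma qp1 (rho b1 b2 : R) : -1 < rho -> rho < 1 -> 0 < b1 ->
  forall x1 x2, b1 <= x1 -> b2 <= x2 -> q2 rho b1 (rho * b1) <= q2 rho x1 x2.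
Proof.
move=> r1 r2 p x1 x2 h1 h2; rewrite q2_diag1 //.
apply: le_trans (q2_ge1 _ _ r1 r2); nra.
Qed.
Lemma qp2 (rho b1 b2 : R) : -1 < rho -> rho < 1 -> 0 < b2 ->
  forall x1 x2, b1 <= x1 -> b2 <= x2 -> q2 rho (rho * b2) b2 <= q2 rho x1 x2.
Proof.
move=> r1 r2 p x1 x2 h1 h2; rewrite q2_diag2 //.
apply: le_trans (q2_ge2 _ _ r1 r2); nra.
Qed.

Lemma lbg1 (rho alpha mu t : R) : -1 < rho -> rho < 1 -> 0 < t ->
  t^-1 * (1 + t) ^+ 2 <= g rho alpha mu t.
Proof.
move=> r1 r2 t0; apply: g_lb2 => // x1 x2 h1 h2.
apply: le_trans (q2_ge1 _ _ r1 r2); nra.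
Qed.
Lemma lbg2 (rho alpha mu t : R) : -1 < rho -> rho < 1 -> 0 < alpha -> 0 < mu -> 0 < t ->
  t^-1 * (alpha + mu * t) ^+ 2 <= g rho alpha mu t.
Proof.
move=> r1 r2 a0 m0 t0; apply: g_lb2 => // x1 x2 h1 h2.
have mt : 0 < mu * t by apply: mulr_gt0.
apply: le_trans (q2_ge2 _ _ r1 r2); nra.
Qed.
Lemma lbgT (rho alpha mu t w1 w2 : R) : -1 < rho -> rho < 1 -> 0 < alpha -> 0 < mu -> 0 < t ->
  0 <= w1 -> 0 <= w2 -> 0 < w1^+2 + 2 * rho * w1 * w2 + w2^+2 ->
  t^-1 * ((w1 * (1 + t) + w2 * (alpha + mu * t)) ^+ 2 / (w1^+2 + 2 * rho * w1 * w2 + w2^+2))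
    <= g rho alpha mu t.
Proof.
move=> r1 r2 a0 m0 t0 p1 p2 E0; apply: g_lb2 => // x1 x2 h1 h2.
rewrite ler_pdivrMr //; apply: (le_trans _ (q2_CS w1 w2 x1 x2 r1 r2)).
have : 0 <= w1 * (x1 - (1 + t)) by apply: mulr_ge0 => //; rewrite subr_ge0.
have : 0 <= w2 * (x2 - (alpha + mu * t)) by apply: mulr_ge0 => //; rewrite subr_ge0.
have : 0 <= w1 * (1 + t) + w2 * (alpha + mu * t).
  have : 0 < mu * t by apply: mulr_gt0.
  by move=> ?; apply: addr_ge0; apply: mulr_ge0 => //; nra.
nra.
Qed.
Lemma sq_lt (X Y : R) : 0 <= X -> Y ^+ 2 < X ^+ 2 -> Y < X.
Proof.
move=> X0 h; rewrite ltNge; apply/negP => hYX.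
have Y0 : 0 <= Y := le_trans X0 hYX.
have : 0 <= (Y - X) * (Y + X) by apply: mulr_ge0; lra.
nra.
Qed.
Lemma w2pos (rho alpha mu s : R) : -1 < rho -> rho < 1 -> 0 < alpha -> 0 < mu -> 0 < s ->
  (1 + mu^+2 - 2 * mu * rho) * s^+2 = 1 + alpha^+2 - 2 * alpha * rho ->
  2 * rho < alpha + mu -> 0 < alpha + mu * s - rho * (1 + s).
Proof.
move=> r1 r2 a0 m0 s0 hs h2.
have c0 : 0 < 1 - rho^+2 by nra.
have C0 : 0 < 1 + mu^+2 - 2 * mu * rho by have := sqr_ge0 (mu - rho); nra.
have key : (1 + alpha^+2 - 2 * alpha * rho) * (mu - rho)^+2 - (1 + mu^+2 - 2 * mu * rho) * (alpha - rho)^+2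
   = (1 - rho^+2) * (mu - alpha) * (mu + alpha - 2 * rho) by ring.
have sw1 : (rho - alpha)^+2 = (alpha - rho)^+2 by ring.
have sw2 : (rho - mu)^+2 = (mu - rho)^+2 by ring.
have e : alpha + mu * s - rho * (1 + s) = (alpha - rho) + s * (mu - rho) by ring.
rewrite e.
case: (leP rho alpha) => ha; case: (leP rho mu) => hm.
- case: (leP s 1) => hs1.
    have : 0 < s * ((alpha - rho) + (mu - rho)) by apply: mulr_gt0 => //; lra.
    have : 0 <= (1 - s) * (alpha - rho) by apply: mulr_ge0; lra.
    nra.
  have : 0 <= (s - 1) * (mu - rho) by apply: mulr_ge0; lra.
  nra.
- have P : 0 < (1 - rho^+2) * (alpha - mu) * (mu + alpha - 2 * rho).
    by apply: mulr_gt0; [apply: mulr_gt0|]; lra.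
  have hY : (s * (rho - mu)) ^+ 2 < (alpha - rho) ^+ 2.
    rewrite -(ltr_pM2l C0) exprMn mulrA hs sw2.
    have : (1 - rho^+2) * (alpha - mu) * (mu + alpha - 2 * rho) = 
           - ((1 - rho^+2) * (mu - alpha) * (mu + alpha - 2 * rho)) by ring.
    lra.
  have X0 : 0 <= alpha - rho by lra.
  have := sq_lt X0 hY; lra.
- have P : 0 < (1 - rho^+2) * (mu - alpha) * (mu + alpha - 2 * rho).
    by apply: mulr_gt0; [apply: mulr_gt0|]; lra.
  have hY : (rho - alpha) ^+ 2 < (s * (mu - rho)) ^+ 2.
    rewrite -(ltr_pM2l C0) exprMn [X in _ < X]mulrA hs sw1; lra.
  have X0 : 0 <= s * (mu - rho) by apply: mulr_ge0; lra.
  have := sq_lt X0 hY; lra.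
- lra.
Qed.
Lemma w1pos (rho alpha mu s : R) : -1 < rho -> rho < 1 -> 0 < alpha -> 0 < mu -> 0 < s ->
  (1 + mu^+2 - 2 * mu * rho) * s^+2 = 1 + alpha^+2 - 2 * alpha * rho ->
  2 * rho * alpha * mu < alpha + mu -> 0 < 1 + s - rho * (alpha + mu * s).
Proof.
move=> r1 r2 a0 m0 s0 hs h2.
have c0 : 0 < 1 - rho^+2 by nra.
have C0 : 0 < 1 + mu^+2 - 2 * mu * rho by have := sqr_ge0 (mu - rho); nra.
have key : (1 + alpha^+2 - 2 * alpha * rho) * (1 - rho * mu)^+2 - (1 + mu^+2 - 2 * mu * rho) * (1 - rho * alpha)^+2
   = (1 - rho^+2) * (alpha - mu) * (alpha + mu - 2 * rho * alpha * mu) by ring.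
have sw1 : (rho * alpha - 1)^+2 = (1 - rho * alpha)^+2 by ring.
have sw2 : (rho * mu - 1)^+2 = (1 - rho * mu)^+2 by ring.
have e : 1 + s - rho * (alpha + mu * s) = (1 - rho * alpha) + s * (1 - rho * mu) by ring.
have h3 : 0 < alpha * (1 - rho * mu) + mu * (1 - rho * alpha) by lra.
rewrite e.
case: (leP (rho * alpha) 1) => ha; case: (leP (rho * mu) 1) => hm.
- have S0 : 0 < (1 - rho * alpha) + (1 - rho * mu).
    have : 0 <= alpha * (1 - rho * alpha) by apply: mulr_ge0; lra.
    have : 0 <= mu * (1 - rho * mu) by apply: mulr_ge0; lra.
    nra.
  case: (leP s 1) => hs1.
    have : 0 < s * ((1 - rho * alpha) + (1 - rho * mu)) by apply: mulr_gt0.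
    have : 0 <= (1 - s) * (1 - rho * alpha) by apply: mulr_ge0; lra.
    nra.
  have : 0 <= (s - 1) * (1 - rho * mu) by apply: mulr_ge0; lra.
  nra.
-
  have rp : 0 < rho by nra.
  have ha' : rho * alpha < 1.
    rewrite ltNge; apply/negP => h; have : 0 <= mu * (rho * alpha - 1) by apply: mulr_ge0; lra.
    have : 0 < alpha * (rho * mu - 1) by apply: mulr_gt0; lra.
    nra.
  have ma : alpha < mu by nra.
  have P : 0 < (1 - rho^+2) * (mu - alpha) * (alpha + mu - 2 * rho * alpha * mu).
    by apply: mulr_gt0; [apply: mulr_gt0|]; lra.
  have hY : (s * (rho * mu - 1)) ^+ 2 < (1 - rho * alpha) ^+ 2.
    rewrite -(ltr_pM2l C0) exprMn mulrA hs sw2.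
    have : (1 - rho^+2) * (alpha - mu) * (alpha + mu - 2 * rho * alpha * mu) = 
           - ((1 - rho^+2) * (mu - alpha) * (alpha + mu - 2 * rho * alpha * mu)) by ring.
    lra.
  have X0 : 0 <= 1 - rho * alpha by lra.
  have := sq_lt X0 hY; lra.
- have rp : 0 < rho by nra.
  have hm' : rho * mu < 1.
    rewrite ltNge; apply/negP => h; have : 0 <= alpha * (rho * mu - 1) by apply: mulr_ge0; lra.
    have : 0 < mu * (rho * alpha - 1) by apply: mulr_gt0; lra.
    nra.
  have ma : mu < alpha by nra.
  have P : 0 < (1 - rho^+2) * (alpha - mu) * (alpha + mu - 2 * rho * alpha * mu).
    by apply: mulr_gt0; [apply: mulr_gt0|]; lra.
  have hY : (rho * alpha - 1) ^+ 2 < (s * (1 - rho * mu)) ^+ 2.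
    rewrite -(ltr_pM2l C0) exprMn [X in _ < X]mulrA hs sw1; lra.
  have X0 : 0 <= s * (1 - rho * mu) by apply: mulr_ge0; lra.
  have := sq_lt X0 hY; lra.
- have : 0 < alpha * (rho * mu - 1) by apply: mulr_gt0; lra.
  have : 0 < mu * (rho * alpha - 1) by apply: mulr_gt0; lra.
  nra.
Qed.
Lemma t00P (rho alpha mu : R) : -1 < rho -> rho < 1 ->
  0 < t00 rho alpha mu /\
  (1 + mu^+2 - 2 * mu * rho) * t00 rho alpha mu ^+ 2 = 1 + alpha^+2 - 2 * alpha * rho.
Proof.
move=> r1 r2.
have c0 : 0 < 1 - rho^+2 by nra.
have C0 : 0 < 1 + mu^+2 - 2 * mu * rho by have := sqr_ge0 (mu - rho); nra.
have A0 : 0 < 1 + alpha^+2 - 2 * alpha * rho by have := sqr_ge0 (alpha - rho); nra.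
have Q0 : 0 < (1 + alpha^+2 - 2 * alpha * rho) / (1 + mu^+2 - 2 * mu * rho) by apply: divr_gt0.
rewrite /t00 sqrtr_gt0 Q0 sqr_sqrtr ?ltW //; split => //.
by rewrite mulrC divfK // lt0r_neq0.
Qed.

Definition w1f (rho alpha mu s : R) := 1 + s - rho * (alpha + mu * s).
Definition w2f (rho alpha mu s : R) := alpha + mu * s - rho * (1 + s).
Definition Ef (rho alpha mu s : R) :=
  w1f rho alpha mu s ^+ 2 + 2 * rho * w1f rho alpha mu s * w2f rho alpha mu s + w2f rho alpha mu s ^+ 2.
Definition kf (rho alpha mu s : R) := w1f rho alpha mu s + mu * w2f rho alpha mu s.

Lemma R1_core (rho alpha mu s : R) : -1 < rho -> rho < 1 -> 0 < alpha -> 0 < mu -> 0 < s ->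
  (1 + mu^+2 - 2 * mu * rho) * s^+2 = 1 + alpha^+2 - 2 * alpha * rho ->
  0 < w1f rho alpha mu s -> 0 < w2f rho alpha mu s ->
  [/\ 0 < Ef rho alpha mu s, 0 < kf rho alpha mu s,
     (forall t, 0 < t ->
       t^-1 * ((w1f rho alpha mu s * (1 + t) + w2f rho alpha mu s * (alpha + mu * t)) ^+ 2
                / Ef rho alpha mu s)
       = kf rho alpha mu s * (s + t) ^+ 2 / (2 * (1 - rho^+2) * s * t))
   & s^-1 * q2 rho (1 + s) (alpha + mu * s) = 2 * kf rho alpha mu s / (1 - rho^+2)].
Proof.
move=> r1 r2 a0 m0 s0 hs p1 p2.
have c0 : 0 < 1 - rho^+2 by nra.
have k0 : 0 < kf rho alpha mu s by rewrite /kf; apply: addr_gt0 => //; apply: mulr_gt0.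
have ea : w1f rho alpha mu s + alpha * w2f rho alpha mu s = kf rho alpha mu s * s.
  apply/eqP; rewrite -subr_eq0; apply/eqP.
  have -> : w1f rho alpha mu s + alpha * w2f rho alpha mu s - kf rho alpha mu s * s =
     (1 + alpha^+2 - 2 * alpha * rho) - (1 + mu^+2 - 2 * mu * rho) * s^+2
    by rewrite /kf /w1f /w2f; ring.
  by rewrite hs subrr.
have eE : Ef rho alpha mu s = (1 - rho^+2) * (w1f rho alpha mu s + alpha * w2f rho alpha mu s + kf rho alpha mu s * s)
  by rewrite /Ef /kf /w1f /w2f; ring.
rewrite ea in eE.
have eN : q2 rho (1 + s) (alpha + mu * s) = (w1f rho alpha mu s + alpha * w2f rho alpha mu s + kf rho alpha mu s * s) / (1 - rho^+2)
  by rewrite /q2 /kf /w1f /w2f; ring.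
rewrite ea in eN.
have E0 : 0 < Ef rho alpha mu s by rewrite eE; apply: mulr_gt0 => //; apply: addr_gt0; apply: mulr_gt0.
split => //.
  move=> t t0.
  have -> : w1f rho alpha mu s * (1 + t) + w2f rho alpha mu s * (alpha + mu * t)
     = (w1f rho alpha mu s + alpha * w2f rho alpha mu s) + kf rho alpha mu s * t
    by rewrite /kf; ring.
  rewrite ea eE.
  have hc : 1 - rho^+2 != 0 := lt0r_neq0 c0.
  have hk : kf rho alpha mu s != 0 := lt0r_neq0 k0.
  have hs' : s != 0 := lt0r_neq0 s0.
  have ht : t != 0 := lt0r_neq0 t0.
  have hks : kf rho alpha mu s * s + kf rho alpha mu s * s != 0.
    by apply: lt0r_neq0; apply: addr_gt0; apply: mulr_gt0.
  by field; rewrite ht hs' hc hks.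
rewrite eN.
have hc : 1 - rho^+2 != 0 := lt0r_neq0 c0.
have hs' : s != 0 := lt0r_neq0 s0.
have hk : kf rho alpha mu s != 0 := lt0r_neq0 k0.
by field; rewrite ?hs' ?hc ?hk.
Qed.
Lemma g0E (rho alpha mu t : R) : -1 < rho -> rho < 1 -> t != 0 ->
  g0 rho alpha mu t = t^-1 * q2 rho (1 + t) (alpha + mu * t).
Proof.
move=> r1 r2 ht; have hc : 1 - rho^+2 != 0 by rewrite subr_eq0 eq_sym rho2.
rewrite /g0 /q2; by field; rewrite ?ht ?hc.
Qed.

Lemma ess_unique (rho : R) (b : 'cV[R]_2) I :
  (I = [set idx1]%SET \/ ~ is_essential (Sigma rho) b [set idx1]%SET) ->
  (I = [set idx2]%SET \/ ~ is_essential (Sigma rho) b [set idx2]%SET) ->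
  (I = [set: 'I_2]%SET \/ ~ is_essential (Sigma rho) b [set: 'I_2]%SET) ->
  forall J, is_essential (Sigma rho) b J -> J = I.
Proof.
move=> h1 h2 h3 J HJ; case: (subsets2 J) => eJ; subst J.
- by case: HJ => /eqP.
- by case: h1 => // /(_ HJ).
- by case: h2 => // /(_ HJ).
- by case: h3 => // /(_ HJ).
Qed.

Lemma R1_regime (rho alpha mu : R) : -1 < rho -> rho < 1 -> 0 < alpha -> 0 < mu ->
  0 < w1f rho alpha mu (t00 rho alpha mu) -> 0 < w2f rho alpha mu (t00 rho alpha mu) ->
  regime rho alpha mu (t00 rho alpha mu) [set: 'I_2] finset.set0
        (g0 rho alpha mu (t00 rho alpha mu))
        (d2 (g0 rho alpha mu) (t00 rho alpha mu)).
Proof.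
move=> r1 r2 a0 m0.
have [s0 hs] := t00P alpha mu r1 r2.
move: s0 hs; set s := t00 rho alpha mu => s0 hs p1 p2.
have c0 : 0 < 1 - rho^+2 by nra.
have [E0 k0 LB gs0] := R1_core r1 r2 a0 m0 s0 hs p1 p2.
have gs : g rho alpha mu s = s^-1 * q2 rho (1 + s) (alpha + mu * s).
  apply: g_eq2 => //; apply: qpT => //; exact: ltW.
have essT' : essential_set (Sigma rho) (bvec alpha mu s) = [set: 'I_2]%SET.
  apply: essential_setE.
    apply/essT => //; rewrite bvec1 bvec2; split => //.
    by apply: qp_min2; rewrite ?bvec1 ?bvec2 //; apply: qpT => //; exact: ltW.
  apply: ess_unique; [right|right|by left].
  - by move/ess1; rewrite bvec1 bvec2 => -[_ h _]; move: p2; rewrite /w2f; lra.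
  - by move/ess2; rewrite bvec1 bvec2 => -[_ h _]; move: p1; rewrite /w1f; lra.
have decomp : forall t, 0 < t -> kf rho alpha mu s * (s + t) ^+ 2 / (2 * (1 - rho ^+ 2) * s * t) =
       2 * kf rho alpha mu s / (1 - rho ^+ 2) + kf rho alpha mu s * (s - t) ^+ 2 / (2 * (1 - rho ^+ 2) * s * t).
  move=> t t0; have hc : 1 - rho^+2 != 0 := lt0r_neq0 c0.
  have hs' : s != 0 := lt0r_neq0 s0.
  have ht : t != 0 := lt0r_neq0 t0.
  by field; rewrite ht hs' hc.
have Xge : forall t, 0 < t -> 0 <= kf rho alpha mu s * (s - t) ^+ 2 / (2 * (1 - rho ^+ 2) * s * t).
  move=> t t0; apply: divr_ge0; first by apply: mulr_ge0; [exact: ltW|exact: sqr_ge0].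
  by apply: mulr_ge0; [apply: mulr_ge0|exact: ltW]; [apply: mulr_ge0|exact: ltW]; [|exact: ltW].
have LBt : forall t, 0 < t -> 2 * kf rho alpha mu s / (1 - rho ^+ 2) + kf rho alpha mu s * (s - t) ^+ 2 / (2 * (1 - rho ^+ 2) * s * t) <= g rho alpha mu t.
  by move=> t t0; rewrite -decomp // -LB //; exact: (lbgT r1 r2 a0 m0 t0 (ltW p1) (ltW p2) E0).
split.
- split => // t t0.
    by rewrite gs gs0; apply: le_trans (LBt t t0); rewrite lerDl; exact: Xge.
  move=> e; have := LBt t t0; rewrite e gs gs0 gerDl => hX.
  have hX0 : kf rho alpha mu s * (s - t) ^+ 2 / (2 * (1 - rho ^+ 2) * s * t) = 0.
    by apply/eqP; rewrite eq_le hX Xge.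
  move/eqP: hX0; rewrite mulf_eq0 invr_eq0 mulf_eq0 (negPf (lt0r_neq0 k0)) /=.
  rewrite expf_eq0 /= subr_eq0 => /orP[/eqP -> //|].
  rewrite !mulf_eq0 (negPf (lt0r_neq0 c0)) (negPf (lt0r_neq0 s0)) (negPf (lt0r_neq0 t0)) /=.
  by rewrite pnatr_eq0.
- exact: essT'.
- exact: weakT.
- by rewrite gs g0E // lt0r_neq0.
rewrite (gtT _ _ r1 r2 essT') col2E1 col2E2.
rewrite (@d2_form _ ((1 + alpha ^+ 2 - 2 * alpha * rho) / (1 - rho ^+ 2))
   (2 * (1 + alpha * mu - rho * alpha - rho * mu) / (1 - rho ^+ 2))
   ((1 + mu ^+ 2 - 2 * rho * mu) / (1 - rho ^+ 2)) s s0) //.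
by rewrite /q2; ring.
Qed.
Lemma RI_regime (rho alpha mu : R) : -1 < rho -> rho < 1 -> 0 < alpha -> 0 < mu ->
  alpha + mu <= 2 * rho ->
  regime rho alpha mu 1 [set idx1]
    (if rho * (1 + 1) == alpha + mu * 1 then [set idx2] else finset.set0)%SET
    (g1 1) (d2 (@g1 R) 1).
Proof.
move=> r1 r2 a0 m0 h.
have rp : 0 < rho by lra.
have g1E : forall t : R, 0 < t -> g1 t = 1 * t^-1 + 2 + 1 * t.
  move=> t t0; have ht : t != 0 := lt0r_neq0 t0.
  by rewrite /g1; field.
have gs : g rho alpha mu 1 = 4.
  rewrite (@g_eq2 rho alpha mu 1 (1 + 1) (rho * (1 + 1))) //; last 2 first.
  - by rewrite mulr1; lra.
  - by apply: qp1 => //; lra.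
  by rewrite q2_diag1 // invr1 mul1r; ring.
have ess : essential_set (Sigma rho) (bvec alpha mu 1) = [set idx1]%SET.
  apply: essential_setE.
    apply/ess1; rewrite !bvec1 !bvec2; split; [lra|rewrite mulr1; lra|].
    by apply: qp_min2; rewrite ?bvec1 ?bvec2 ?mulr1 //; [lra|apply: qp1 => //; lra].
  apply: ess_unique; [by left|right|right].
  - move/ess2; rewrite bvec1 bvec2 mulr1 => -[_ hh _].
    have : rho * (alpha + mu) <= rho * (2 * rho) by rewrite ler_pM2l.
    nra.
  - by move/(essT _ r1 r2); rewrite bvec1 bvec2 mulr1 => -[_ hh _]; lra.
split.
- split => // [t t0|t t0 e].
    rewrite gs; apply: le_trans (lbg1 alpha mu r1 r2 t0).
    have ht : t != 0 := lt0r_neq0 t0.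
    have -> : t^-1 * (1 + t) ^+ 2 = 4 + (1 - t) ^+ 2 / t by field.
    by rewrite lerDl; apply: divr_ge0; [exact: sqr_ge0|exact: ltW].
  have := lbg1 alpha mu r1 r2 t0; rewrite e gs.
  have ht : t != 0 := lt0r_neq0 t0.
  have -> : t^-1 * (1 + t) ^+ 2 = 4 + (1 - t) ^+ 2 / t by field.
  rewrite gerDl => hX.
  have : (1 - t) ^+ 2 / t = 0.
    by apply/eqP; rewrite eq_le hX; apply: divr_ge0; [exact: sqr_ge0|exact: ltW].
  move/eqP; rewrite mulf_eq0 invr_eq0 (negPf ht) orbF expf_eq0 /= subr_eq0.
  by move/eqP.
- exact: ess.
- by rewrite (weak1 ess) bvec1 bvec2.
- by rewrite gs /g1 invr1 mul1r; ring.
rewrite (gt1 _ _ ess) col2E1 (@d2_form _ 1 2 1 1 ltr01) //.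
by rewrite !expr1n invr1 !mulr1.
Qed.
Lemma RII_regime (rho alpha mu : R) : -1 < rho -> rho < 1 -> 0 < alpha -> 0 < mu ->
  alpha + mu <= 2 * rho * alpha * mu ->
  regime rho alpha mu (t02 alpha mu) [set idx2]
    (if rho * (alpha + mu * t02 alpha mu) == 1 + t02 alpha mu then [set idx1] else finset.set0)%SET
    (g2 alpha mu (t02 alpha mu)) (d2 (g2 alpha mu) (t02 alpha mu)).
Proof.
move=> r1 r2 a0 m0 h.
have am : 0 < alpha * mu by apply: mulr_gt0.
have rp : 0 < rho by nra.
set s := t02 alpha mu.
have s0 : 0 < s by rewrite /s /t02; apply: divr_gt0.
have ms : mu * s = alpha by rewrite /s /t02 mulrC divfK // lt0r_neq0.
have key : 1 + s <= rho * (alpha + mu * s).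
  rewrite ms; rewrite -(ler_pM2l m0) mulrDr mulr1 ms; nra.
have g2E : forall t : R, 0 < t -> g2 alpha mu t = alpha ^+ 2 * t^-1 + 2 * alpha * mu + mu ^+ 2 * t.
  move=> t t0; have ht : t != 0 := lt0r_neq0 t0.
  by rewrite /g2; field.
have b20 : 0 < alpha + mu * s by rewrite ms; lra.
have gs : g rho alpha mu s = g2 alpha mu s.
  rewrite (@g_eq2 rho alpha mu s (rho * (alpha + mu * s)) (alpha + mu * s)) //; last first.
    by apply: qp2.
  by rewrite q2_diag2.
have g2s : g2 alpha mu s = 4 * alpha * mu.
  rewrite /g2 ms /s /t02; have ha : alpha != 0 := lt0r_neq0 a0.
  have hm : mu != 0 := lt0r_neq0 m0.
  by field; rewrite hm ha.
have ess : essential_set (Sigma rho) (bvec alpha mu s) = [set idx2]%SET.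
  apply: essential_setE.
    apply/ess2; rewrite !bvec1 !bvec2; split => //.
    by apply: qp_min2; rewrite ?bvec1 ?bvec2 //; apply: qp2.
  apply: ess_unique; [right|by left|right].
  - move/ess1; rewrite bvec1 bvec2 ms => -[_ hh _].
    move: key; rewrite ms => key.
    have : rho * (1 + s) <= rho * (rho * (alpha + alpha)) by rewrite ler_pM2l.
    nra.
  - by move/(essT _ r1 r2); rewrite bvec1 bvec2 => -[hh _ _]; lra.
split.
- split => // [t t0|t t0 e].
    rewrite gs g2s; apply: le_trans (lbg2 r1 r2 a0 m0 t0).
    have ht : t != 0 := lt0r_neq0 t0.
    have -> : t^-1 * (alpha + mu * t) ^+ 2 = 4 * alpha * mu + (alpha - mu * t) ^+ 2 / t by field.
    by rewrite lerDl; apply: divr_ge0; [exact: sqr_ge0|exact: ltW].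
  have := lbg2 r1 r2 a0 m0 t0; rewrite e gs g2s.
  have ht : t != 0 := lt0r_neq0 t0.
  have -> : t^-1 * (alpha + mu * t) ^+ 2 = 4 * alpha * mu + (alpha - mu * t) ^+ 2 / t by field.
  rewrite gerDl => hX.
  have : (alpha - mu * t) ^+ 2 / t = 0.
    by apply/eqP; rewrite eq_le hX; apply: divr_ge0; [exact: sqr_ge0|exact: ltW].
  move/eqP; rewrite mulf_eq0 invr_eq0 (negPf ht) orbF expf_eq0 /= subr_eq0 => /eqP e2.
  by rewrite /s /t02 e2 mulrAC divff ?mul1r // lt0r_neq0.
- exact: ess.
- by rewrite (weak2 ess) bvec1 bvec2.
- exact: gs.
rewrite (gt1 _ _ ess) col2E2 (@d2_form _ (alpha ^+ 2) (2 * alpha * mu) (mu ^+ 2) s s0) //.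
by rewrite mulrAC.
Qed.
Lemma g1_1 : g1 (1 : R) = 4. Proof. by rewrite /g1 invr1 mul1r; ring. Qed.
Lemma d2g1_1 : d2 (@g1 R) 1 = 2.
Proof.
rewrite (@d2_form _ 1 2 1 1 ltr01) ?expr1n ?invr1 ?mulr1 // => t t0.
have ht : t != 0 := lt0r_neq0 t0. by rewrite /g1; field.
Qed.
Lemma g2_s (alpha mu : R) : 0 < alpha -> 0 < mu -> g2 alpha mu (t02 alpha mu) = 4 * alpha * mu.
Proof.
move=> a0 m0; have ha : alpha != 0 := lt0r_neq0 a0; have hm : mu != 0 := lt0r_neq0 m0.
by rewrite /g2 /t02; field; rewrite hm ha.
Qed.
Lemma d2g2_s (alpha mu : R) : 0 < alpha -> 0 < mu -> d2 (g2 alpha mu) (t02 alpha mu) = 2 * alpha^-1 * mu ^+ 3.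
Proof.
move=> a0 m0; have ha : alpha != 0 := lt0r_neq0 a0; have hm : mu != 0 := lt0r_neq0 m0.
have s0 : 0 < t02 alpha mu by apply: divr_gt0.
rewrite (@d2_form _ (alpha ^+ 2) (2 * alpha * mu) (mu ^+ 2) _ s0).
  by rewrite /t02; field; rewrite hm ha.
move=> t t0; have ht : t != 0 := lt0r_neq0 t0. by rewrite /g2; field.
Qed.
Lemma am_le1 (alpha mu : R) : 0 < alpha -> mu <= alpha^-1 -> alpha * mu <= 1.
Proof. by move=> a0 h; rewrite -(divff (lt0r_neq0 a0)) ler_pM2l. Qed.
Lemma am_gt1 (alpha mu : R) : 0 < alpha -> alpha^-1 < mu -> 1 < alpha * mu.
Proof. by move=> a0 h; rewrite -(divff (lt0r_neq0 a0)) ltr_pM2l. Qed.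
End S.

Unset Implicit Arguments.
Theorem corollary6p3 (R : realType) (rho alpha mu : R) :
  -1 < rho -> rho < 1 -> 0 < alpha -> 0 < mu ->
  (* (i) *)
  ((mu < 1 /\ alpha < 1) \/ [/\ mu < 1, 1 <= alpha & mu <= alpha^-1]
     \/ [/\ 1 <= mu, alpha < 1 & mu <= alpha^-1] ->
   (rho < (alpha + mu) / 2 ->
      regime rho alpha mu (t00 rho alpha mu) [set: 'I_2] finset.set0
        (g0 rho alpha mu (t00 rho alpha mu))
        (d2 (g0 rho alpha mu) (t00 rho alpha mu))) /\
   (rho = (alpha + mu) / 2 ->
      [/\ t00 rho alpha mu = (t01 R),
          regime rho alpha mu (t01 R) [set idx1] [set idx2] (g1 (t01 R)) (d2 (@g1 R) (t01 R)),
          g0 rho alpha mu (t00 rho alpha mu) = g1 (t01 R),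
          g1 (t01 R) = 4
        & d2 (@g1 R) (t01 R) = 2]) /\
   ((alpha + mu) / 2 < rho ->
      [/\ regime rho alpha mu (t01 R) [set idx1] finset.set0 (g1 (t01 R)) (d2 (@g1 R) (t01 R)),
          g1 (t01 R) = 4
        & d2 (@g1 R) (t01 R) = 2])) /\
  (* (ii) *)
  ((1 <= mu /\ 1 <= alpha) \/ [/\ mu < 1, 1 <= alpha & alpha^-1 < mu]
     \/ [/\ 1 <= mu, alpha < 1 & alpha^-1 < mu] ->
   (rho < (alpha + mu) / (2 * alpha * mu) ->
      regime rho alpha mu (t00 rho alpha mu) [set: 'I_2] finset.set0
        (g0 rho alpha mu (t00 rho alpha mu))
        (d2 (g0 rho alpha mu) (t00 rho alpha mu))) /\
   (rho = (alpha + mu) / (2 * alpha * mu) ->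
      [/\ t00 rho alpha mu = t02 alpha mu,
          regime rho alpha mu (t02 alpha mu) [set idx2] [set idx1]
            (g2 alpha mu (t02 alpha mu)) (d2 (g2 alpha mu) (t02 alpha mu)),
          g0 rho alpha mu (t00 rho alpha mu) = g2 alpha mu (t02 alpha mu),
          g2 alpha mu (t02 alpha mu) = 4 * alpha * mu
        & d2 (g2 alpha mu) (t02 alpha mu) = 2 * alpha^-1 * mu ^+ 3]) /\
   ((alpha + mu) / (2 * alpha * mu) < rho ->
      [/\ regime rho alpha mu (t02 alpha mu) [set idx2] finset.set0
            (g2 alpha mu (t02 alpha mu)) (d2 (g2 alpha mu) (t02 alpha mu)),
          g2 alpha mu (t02 alpha mu) = 4 * alpha * mu
        & d2 (g2 alpha mu) (t02 alpha mu) = 2 * alpha^-1 * mu ^+ 3])).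
Proof.
move=> r1 r2 a0 m0.
have c0 : 0 < 1 - rho^+2 by nra.
have C0 : 0 < 1 + mu^+2 - 2 * mu * rho by have := sqr_ge0 (mu - rho); nra.
have A0 : 0 < 1 + alpha^+2 - 2 * alpha * rho by have := sqr_ge0 (alpha - rho); nra.
have [s0 hs] := t00P alpha mu r1 r2.
have am0 : 0 < alpha * mu by apply: mulr_gt0.
split.
  move=> Hi.
  have am : alpha * mu <= 1.
    case: Hi => [[h1 h2]|[[h1 h2 h3]|[h1 h2 h3]]]; last 2 first.
    - exact: am_le1.
    - exact: am_le1.
    nra.
  split; [|split].
  - rewrite ltr_pdivlMr // mulrC => hr.
    apply: R1_regime => //.
      apply: (w1pos r1 r2 a0 m0 s0 hs).
      case: (leP rho 0) => hr0; first nra.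
      have : rho * (alpha * mu) <= rho * 1 by rewrite ler_pM2l.
      lra.
    exact: (w2pos r1 r2 a0 m0 s0 hs).
  - move=> hr.
    have h2r : 2 * rho = alpha + mu by rewrite hr mulrC divfK.
    have t1 : t00 rho alpha mu = t01 R.
      rewrite /t00 /t01.
      have -> : 1 + alpha ^+ 2 - 2 * alpha * rho = 1 + mu ^+ 2 - 2 * mu * rho.
        have : 1 + alpha ^+ 2 - 2 * alpha * rho - (1 + mu ^+ 2 - 2 * mu * rho) = (alpha - mu) * (alpha + mu - 2 * rho) by ring.
        by rewrite h2r subrr mulr0 => /eqP; rewrite subr_eq0 => /eqP.
      by rewrite divff ?sqrtr1 // lt0r_neq0.
    have Kv : rho * (1 + 1) == alpha + mu * 1 by apply/eqP; rewrite mulr1 -h2r; ring.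
    have hle : alpha + mu <= 2 * rho by rewrite h2r.
    have := RI_regime r1 r2 a0 m0 hle; rewrite Kv => Hreg.
    split => //; last exact: d2g1_1.
    - rewrite t1 /t01 g0E // ?oner_neq0 // invr1 mul1r -(eqP Kv) q2_diag1 // g1_1; ring.
    - exact: g1_1.
  - rewrite ltr_pdivrMr // mulrC => hr.
    have Kv : (rho * (1 + 1) == alpha + mu * 1) = false.
      by apply/negbTE; rewrite mulr1 gt_eqF // mulrDr mulr1; lra.
    have hle : alpha + mu <= 2 * rho by lra.
    have := RI_regime r1 r2 a0 m0 hle; rewrite Kv => Hreg.
    split => //; [exact: g1_1|exact: d2g1_1].
move=> Hii.
have am : 1 <= alpha * mu.
  case: Hii => [[h1 h2]|[[h1 h2 h3]|[h1 h2 h3]]]; first nra; apply: ltW; exact: am_gt1.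
have two : 0 < 2 * alpha * mu by rewrite -mulrA; apply: mulr_gt0.
have e3 : 2 * rho * alpha * mu = rho * (2 * alpha * mu) by ring.
have ss0 : 0 < t02 alpha mu by apply: divr_gt0.
have ms : mu * t02 alpha mu = alpha by rewrite /t02 mulrC divfK // lt0r_neq0.
have hm : mu != 0 := lt0r_neq0 m0.
split; [|split].
- rewrite ltr_pdivlMr // => hr.
  apply: R1_regime => //.
    by apply: (w1pos r1 r2 a0 m0 s0 hs); rewrite e3.
  apply: (w2pos r1 r2 a0 m0 s0 hs).
  case: (leP rho 0) => hr0; first lra.
  have : rho * 1 <= rho * (alpha * mu) by rewrite ler_pM2l.
  lra.
- move=> hr.
  have h2r : rho * (2 * alpha * mu) = alpha + mu by rewrite hr divfK // lt0r_neq0.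
  have eq1 : rho * (alpha + mu * t02 alpha mu) = 1 + t02 alpha mu.
    apply: (mulfI hm); rewrite ms [RHS]mulrDr mulr1 ms.
    have -> : mu * (rho * (alpha + alpha)) = rho * (2 * alpha * mu) by ring.
    by rewrite h2r addrC.
  have t2 : t00 rho alpha mu = t02 alpha mu.
    have key : (1 + alpha ^+ 2 - 2 * alpha * rho) * mu ^+ 2 = (1 + mu ^+ 2 - 2 * mu * rho) * alpha ^+ 2.
      apply/eqP; rewrite -subr_eq0; apply/eqP.
      have -> : (1 + alpha ^+ 2 - 2 * alpha * rho) * mu ^+ 2 - (1 + mu ^+ 2 - 2 * mu * rho) * alpha ^+ 2
        = (mu - alpha) * (mu + alpha - rho * (2 * alpha * mu)) by ring.
      by rewrite h2r [alpha + mu]addrC subrr mulr0.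
    rewrite /t00 /t02.
    have -> : (1 + alpha ^+ 2 - 2 * alpha * rho) / (1 + mu ^+ 2 - 2 * mu * rho) = (alpha / mu) ^+ 2.
      apply/eqP; rewrite expr_div_n eqr_div ?expf_neq0 ?lt0r_neq0 //; apply/eqP.
      by rewrite key mulrC.
    by rewrite sqrtr_sqr ger0_norm // ltW // divr_gt0.
  have hle : alpha + mu <= 2 * rho * alpha * mu by rewrite e3 h2r.
  have := RII_regime r1 r2 a0 m0 hle; rewrite eq1 eqxx => Hreg.
  split => //; [|exact: g2_s|exact: d2g2_s].
  rewrite t2 g0E // ?lt0r_neq0 // -eq1 q2_diag2 //.
- rewrite ltr_pdivrMr // => hr.
  have lt1 : 1 + t02 alpha mu < rho * (alpha + mu * t02 alpha mu).
    rewrite -(ltr_pM2l m0) mulrDr mulr1 ms.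
    have -> : mu * (rho * (alpha + alpha)) = rho * (2 * alpha * mu) by ring.
    lra.
  have hle : alpha + mu <= 2 * rho * alpha * mu by rewrite e3; lra.
  have := RII_regime r1 r2 a0 m0 hle; rewrite gt_eqF // => Hreg.
  split => //; [exact: g2_s|exact: d2g2_s].
Qed.
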